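(* For $1\le i\le r$, $C_{i,r}(a)=G_{i,r-i+2}(a)$ as polynomials in $a$.
   Context: Bernoulli polynomials $B_n(a)$: $\sum_{n\ge0}B_n(a)x^n/n!=xe^{ax}/(e^x-1)$. For $1\le i\le r$, let $S_{i,r}$ be the set of $(n_1,\dots,n_r)\in\mathbb Z_{\ge0}^r$ with $n_1+\dots+n_r=r$, $n_1+\dots+n_j<j$ ($1\le j<i$), and $n_{j+1}+\dots+n_r\le r-j$ ($i\le j<r$), and $C_{i,r}(a)=(-1)^r\sum_{(n_1,\dots,n_r)\in S_{i,r}}\prod_{j=1}^r\frac{B_{n_j}(a)}{n_j!}$. Let $L(a,t)=\sum_{n\ge1}\lambda_n(a)t^n\in\mathbb Q[a][[t]]$ be the compositional inverse (in $t$) of $e^{-at}(e^t-1)$, equivalently the unique such series with $e^{L(a,t)}(1-te^{(a-1)L(a,t)})=1$. The generalized Gregory polynomials $G_{m,n}(a)$ are defined by \[ \sum_{m,n\ge0}G_{m,n}(a)x^my^n=\frac{yL(a,-x)^2-xL(a,-y)^2}{-L(a,-x)+L(a,-y)}. \] *)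

(* Defs.v *)
(* Polynomials in a are {poly rat}, with a = 'X. *)
From HB Require Import structures.
From mathcomp Require Import all_boot all_order all_algebra.
Set Implicit Arguments. Unset Strict Implicit. Unset Printing Implicit Defensive.
Import Order.TTheory GRing.Theory Num.Theory.
Local Open Scope ring_scope.

Notation Qa := {poly rat}.

Definition invfact (n : nat) : Qa := ((n`!%:R : rat)^-1)%:P.

(* ---------- Bernoulli polynomials ----------
   bdiv n = B_n(a)/n!, where sum_n B_n(a) x^n/n! = x e^{ax}/(e^x-1).
   Comparing coefficients of x^(n+1) in x e^{ax} = (e^x - 1) sum_k bdiv k x^k:
     a^n/n! = sum_{k=0}^{n} bdiv k / (n+1-k)!. *)
Fixpoint bdiv_seq (n : nat) : seq Qa :=
  match n with
  | 0 => [:: 1]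
  | m.+1 => let s := bdiv_seq m in
      rcons s ('X ^+ m.+1 * invfact m.+1
               - \sum_(k < m.+1) s`_k * invfact (m.+2 - k))
  end.

Definition bdiv (n : nat) : Qa := (bdiv_seq n)`_n.
Definition bernoulli_poly (n : nat) : Qa := n`!%:R * bdiv n.

(* ---------- the set S_{i,r} and C_{i,r}(a) ----------
   (n_1,...,n_r) is encoded 0-indexed as f : 'I_r -> 'I_(r+1) (n_{j+1} = f j);
   each n_j <= r is forced by n_1+...+n_r = r. *)
Definition inS (i r : nat) (f : {ffun 'I_r -> 'I_r.+1}) : bool :=
  [&& (\sum_(k < r) nat_of_ord (f k) == r)%N,
      [forall j : 'I_r, ((1 <= j) && (j < i))%N ==>
                        (\sum_(k < r | (k < j)%N) nat_of_ord (f k) < j)%N]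
    & [forall j : 'I_r, (i <= j)%N ==>
                        (\sum_(k < r | (j <= k)%N) nat_of_ord (f k) <= r - j)%N]].

Arguments inS i r f : clear implicits.

Definition Cpoly (i r : nat) : Qa :=
  (-1) ^+ r * \sum_(f : {ffun 'I_r -> 'I_r.+1} | inS i r f)
                 \prod_(j < r) (bernoulli_poly (f j) * invfact (f j)).

Definition sdelta0 : nat -> Qa := fun n => (n == 0)%:R.
Definition smul (f g : nat -> Qa) : nat -> Qa :=
  fun n => \sum_(k < n.+1) f k * g (n - k)%N.
Fixpoint spow (f : nat -> Qa) (k : nat) : nat -> Qa :=
  match k with 0 => sdelta0 | k.+1 => smul f (spow f k) end.
(* composition f(g(t)), for g with zero constant term *)
Definition scomp (f g : nat -> Qa) : nat -> Qa :=
  fun n => \sum_(k < n.+1) f k * spow g k n.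
Definition sexp (c : Qa) : nat -> Qa := fun n => c ^+ n * invfact n.
Definition fser : nat -> Qa :=
  smul (sexp (- 'X)) (fun n => sexp 1 n - sdelta0 n).

Definition isL (L : nat -> Qa) : Prop :=
  L 0%N = 0 /\ forall n, scomp fser L n = (n == 1%N)%:R.

Definition sneg (f : nat -> Qa) : nat -> Qa := fun n => (-1) ^+ n * f n.

Definition bmul (F G : nat -> nat -> Qa) : nat -> nat -> Qa :=
  fun m n => \sum_(i < m.+1) \sum_(j < n.+1) F i j * G (m - i)%N (n - j)%N.
Definition inX (f : nat -> Qa) : nat -> nat -> Qa :=
  fun m n => if n == 0%N then f m else 0.
Definition inY (f : nat -> Qa) : nat -> nat -> Qa :=
  fun m n => if m == 0%N then f n else 0.
Definition bX : nat -> nat -> Qa := inX (fun m => (m == 1%N)%:R).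
Definition bY : nat -> nat -> Qa := inY (fun n => (n == 1%N)%:R).

(* sum_{m,n} G m n x^m y^n = (y L(a,-x)^2 - x L(a,-y)^2) / (-L(a,-x) + L(a,-y)),
   stated as: G * (L(a,-y) - L(a,-x)) = y L(a,-x)^2 - x L(a,-y)^2
   (the denominator is a nonzero element of the domain Q[a][[x,y]],
    so this determines G uniquely). *)
Definition isG (L : nat -> Qa) (G : nat -> nat -> Qa) : Prop :=
  forall m n,
    bmul G (fun p q => inY (sneg L) p q - inX (sneg L) p q) m n =
    bmul bY (inX (spow (sneg L) 2)) m n - bmul bX (inY (spow (sneg L) 2)) m n.

(* Main.v *)
Require Import Defs.
From HB Require Import structures.
From mathcomp Require Import all_boot all_order all_algebra.
From mathcomp Require Import zify ring.
Set Implicit Arguments. Unset Strict Implicit. Unset Printing Implicit Defensive.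
Import Order.TTheory GRing.Theory Num.Theory.
Local Open Scope ring_scope.

Definition tr (N : nat) (f : nat -> Qa) : {poly Qa} := \poly_(i < N.+1) f i.
Definition eqU (N : nat) (p q : {poly Qa}) := forall i, (i <= N)%N -> p`_i = q`_i.

Lemma coef_tr N f i : (i <= N)%N -> (tr N f)`_i = f i.
Proof. by move=> h; rewrite coef_poly ltnS h. Qed.

Lemma eqU_refl N p : eqU N p p. Proof. by []. Qed.
Lemma eqU_sym N p q : eqU N p q -> eqU N q p.
Proof. by move=> h i hi; rewrite h. Qed.
Lemma eqU_trans N p q r : eqU N p q -> eqU N q r -> eqU N p r.
Proof. by move=> h1 h2 i hi; rewrite h1 ?h2. Qed.
Lemma eqU_add N p p' q q' : eqU N p p' -> eqU N q q' -> eqU N (p + q) (p' + q').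
Proof. by move=> h1 h2 i hi; rewrite !coefD h1 ?h2. Qed.
Lemma eqU_opp N p p' : eqU N p p' -> eqU N (- p) (- p').
Proof. by move=> h1 i hi; rewrite !coefN h1. Qed.

Lemma eqU_mul N p p' q q' : eqU N p p' -> eqU N q q' -> eqU N (p * q) (p' * q').
Proof.
move=> hp hq i hi; rewrite !coefM; apply: eq_bigr => j _.
have hj : (j <= N)%N by apply: leq_trans hi; rewrite -ltnS.
by rewrite hp // hq // (leq_trans (leq_subr _ _) hi).
Qed.

Lemma eqU_exp N p q k : eqU N p q -> eqU N (p ^+ k) (q ^+ k).
Proof.
move=> h; elim: k => [|k IH]; first by rewrite !expr0.
by rewrite !exprS; apply: eqU_mul.
Qed.

Lemma big_widen0 (n1 n2 : nat) (F : nat -> Qa) : (n1 <= n2)%N ->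
  (forall k, (n1 <= k)%N -> (k < n2)%N -> F k = 0) ->
  \sum_(k < n1) F k = \sum_(k < n2) F k.
Proof.
move=> hn hF; rewrite (big_ord_widen _ _ hn) [RHS](bigID (fun k : 'I_n2 => (k < n1)%N)) /=.
rewrite [X in _ = _ + X]big1 ?addr0 // => k hk; apply: hF => //.
by rewrite leqNgt.
Qed.

Lemma smul_tr N f g i : (i <= N)%N -> smul f g i = (tr N f * tr N g)`_i.
Proof.
move=> hi; rewrite coefM /smul; apply: eq_bigr => j _.
have hj : (j <= N)%N by apply: leq_trans hi; rewrite -ltnS.
by rewrite !coef_tr // (leq_trans (leq_subr _ _) hi).
Qed.

Lemma spow_tr N f k i : (i <= N)%N -> spow f k i = (tr N f ^+ k)`_i.
Proof.
elim: k i => [|k IH] i hi; first by rewrite expr0 coef1.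
rewrite exprS coefM /= /smul; apply: eq_bigr => j _.
have hj : (j <= N)%N by apply: leq_trans hi; rewrite -ltnS.
by rewrite coef_tr // IH // (leq_trans (leq_subr _ _) hi).
Qed.

Lemma powlow (p : {poly Qa}) k n : p`_0 = 0 -> (n < k)%N -> (p ^+ k)`_n = 0.
Proof.
move=> h0; elim: k n => [|k IH] n //= hn.
rewrite exprS coefM big1 // => -[[|j'] hj] _ /=; first by rewrite h0 mul0r.
by rewrite IH ?mulr0 //; lia.
Qed.

Lemma comp_coef N (p q : {poly Qa}) i : q`_0 = 0 -> (i <= N)%N ->
  (p \Po q)`_i = \sum_(k < N.+1) p`_k * (q ^+ k)`_i.
Proof.
move=> h0 hi; rewrite comp_polyE coef_sum.
under eq_bigr do rewrite coefZ.
pose S := maxn (size p) N.+1.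
rewrite (@big_widen0 (size p) S (fun k => p`_k * (q ^+ k)`_i)) ?leq_maxl //; last first.
  by move=> k hk _; rewrite nth_default ?mul0r.
rewrite (@big_widen0 N.+1 S (fun k => p`_k * (q ^+ k)`_i)) ?leq_maxr //.
by move=> k hk _; rewrite powlow ?mulr0 //; lia.
Qed.

Lemma eqU_comp N (p p' q : {poly Qa}) : eqU N p p' -> q`_0 = 0 -> eqU N (p \Po q) (p' \Po q).
Proof.
move=> h h0 i hi; rewrite !(comp_coef _ h0 hi); apply: eq_bigr => k _.
by rewrite h // -ltnS.
Qed.

Lemma eqU_comp2 N (p q q' : {poly Qa}) : eqU N q q' -> q`_0 = 0 -> q'`_0 = 0 ->
  eqU N (p \Po q) (p \Po q').
Proof.
move=> h h0 h0' i hi; rewrite (comp_coef _ h0 hi) (comp_coef _ h0' hi).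
by apply: eq_bigr => k _; rewrite (eqU_exp k h).
Qed.

Lemma scomp_tr N f g i : g 0%N = 0 -> (i <= N)%N ->
  scomp f g i = ((tr N f) \Po (tr N g))`_i.
Proof.
move=> g0 hi; have h0 : (tr N g)`_0 = 0 by rewrite coef_tr.
rewrite (comp_coef _ h0 hi) /scomp.
rewrite (@big_widen0 i.+1 N.+1 (fun k => f k * spow g k i)) //; last first.
  by move=> k hk _; rewrite (spow_tr _ _ hi) powlow ?mulr0.
apply: eq_bigr => k _; rewrite coef_tr ?(spow_tr _ _ hi) //.
by rewrite -ltnS.
Qed.

Lemma size_bdiv_seq n : size (bdiv_seq n) = n.+1.
Proof. by elim: n => //= n IH; rewrite size_rcons IH. Qed.

Lemma bdiv_seq_nth n k : (k <= n)%N -> (bdiv_seq n)`_k = bdiv k.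
Proof.
elim: n k => [|n IH] k hk; first by move: hk; rewrite leqn0 => /eqP ->.
rewrite leq_eqVlt in hk; case/orP: hk => [/eqP -> //|hk].
by rewrite /= nth_rcons size_bdiv_seq hk IH.
Qed.

Lemma bdiv0 : bdiv 0 = 1. Proof. by []. Qed.

Lemma bdiv_rec m : bdiv m.+1 = 'X ^+ m.+1 * invfact m.+1
   - \sum_(k < m.+1) bdiv k * invfact (m.+2 - k).
Proof.
rewrite {1}/bdiv /= nth_rcons size_bdiv_seq ltnn eqxx; congr (_ - _).
by apply: eq_bigr => k _; rewrite bdiv_seq_nth // -ltnS.
Qed.

Lemma invfact0 : invfact 0 = 1. Proof. by rewrite /invfact invr1. Qed.
Lemma invfact1 : invfact 1 = 1. Proof. by rewrite /invfact invr1. Qed.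

Lemma bdiv_I1 n : \sum_(k < n.+1) bdiv k * invfact (n.+1 - k) = 'X ^+ n * invfact n.
Proof.
case: n => [|m]; first by rewrite big_ord1 bdiv0 invfact1 invfact0 !mulr1.
rewrite big_ord_recr /=.
have -> : (m.+2 - m.+1 = 1)%N by lia.
rewrite invfact1 mulr1 bdiv_rec.
by rewrite addrC subrK.
Qed.

Definition e1 (n : nat) : Qa := invfact n.+1.
Definition e1' (n : nat) : Qa := sexp 1 n - sdelta0 n.

Lemma B_e1 N : eqU N (tr N bdiv * tr N e1) (tr N (sexp 'X)).
Proof.
move=> i hi; rewrite -smul_tr // coef_tr // /smul /sexp /e1 -bdiv_I1.
apply: eq_bigr => k _; congr (_ * invfact _).
have := ltn_ord k; lia.
Qed.

Lemma fact_rat i k : (k <= i)%N ->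
  (i`!%:R : rat)^-1 * ('C(i, k))%:R = (k`!%:R)^-1 * ((i - k)`!%:R)^-1.
Proof.
move=> hk; have := bin_fact hk => /(congr1 (fun n => n%:R : rat)).
rewrite !natrM => h.
have h1 : (k`!%:R : rat) != 0 by rewrite pnatr_eq0 -lt0n fact_gt0.
have h2 : ((i - k)`!%:R : rat) != 0 by rewrite pnatr_eq0 -lt0n fact_gt0.
have h3 : (i`!%:R : rat) != 0 by rewrite pnatr_eq0 -lt0n fact_gt0.
have h4 : ('C(i, k)%:R : rat) != 0 by rewrite pnatr_eq0 -lt0n bin_gt0.
by rewrite -h invfM mulrC mulrA mulfV // mul1r invfM.
Qed.

Lemma sexpM N c d : eqU N (tr N (sexp c) * tr N (sexp d)) (tr N (sexp (c + d))).
Proof.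
move=> i hi; rewrite -smul_tr // coef_tr // /smul /sexp addrC exprDn mulr_suml.
apply: eq_bigr => k _.
have hk : (k <= i)%N by rewrite -ltnS.
rewrite -mulr_natr /invfact -polyC_natr.
have -> : d ^+ (i - k) * c ^+ k * (('C(i, k))%:R)%:P * ((i`!)%:R^-1)%:P
   = c ^+ k * d ^+ (i - k) * ((i`!%:R)^-1 * 'C(i, k)%:R)%:P.
  by rewrite polyCM; ring.
by rewrite fact_rat // polyCM mulrACA.
Qed.

Lemma sexp0 N : eqU N (tr N (sexp 0)) 1.
Proof.
move=> i hi; rewrite coef_tr // coef1 /sexp expr0n.
by case: i hi => [|j] _ /=; rewrite ?invfact0 ?mul1r ?mul0r.
Qed.

Lemma e1'_X N : eqU N (tr N e1') ('X * tr N e1).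
Proof.
move=> i hi; rewrite coef_tr // coefXM /e1' /sexp /sdelta0 expr1n mul1r.
case: i hi => [|j] hj /=; first by rewrite invfact0 subrr.
by rewrite coef_tr ?subr0 //; lia.
Qed.

Definition Ps N : {poly Qa} := tr N (sexp (- 'X)) * tr N e1.

Lemma BPs N : eqU N (tr N bdiv * Ps N) 1.
Proof.
rewrite /Ps mulrCA.
apply: (@eqU_trans _ _ (tr N (sexp (- 'X)) * tr N (sexp 'X))).
  by apply: eqU_mul => //; apply: B_e1.
apply: eqU_trans; first by apply: sexpM.
by rewrite addNr; apply: sexp0.
Qed.

Lemma fser_X N : eqU N (tr N fser) ('X * Ps N).
Proof.
move=> i hi; rewrite coef_tr // /fser (smul_tr _ _ hi) /Ps mulrCA.
have h : eqU N (tr N (sexp (- 'X)) * tr N e1') (tr N (sexp (- 'X)) * ('X * tr N e1)).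
  by apply: eqU_mul => //; apply: e1'_X.
exact: h.
Qed.

Section WithL.
Variable L : nat -> Qa.
Hypothesis hL : isL L.

Lemma L0 : L 0%N = 0. Proof. by case: hL. Qed.

Lemma trL0 N : (tr N L)`_0 = 0. Proof. by rewrite coef_tr // L0. Qed.

Lemma K1 N : eqU N ('X * (tr N bdiv \Po tr N L)) (tr N L).
Proof.
set l := tr N L; set Bl := tr N bdiv \Po l.
have hl0 : l`_0 = 0 by apply: trL0.
have hf : eqU N (tr N fser \Po l) 'X.
  move=> i hi; rewrite -scomp_tr ?L0 //; case: hL => _ ->.
  by rewrite coefX.
have hP : eqU N (l * (Ps N \Po l)) 'X.
  apply: eqU_trans hf.
  rewrite -[X in X * _]comp_polyX -comp_polyM.
  by apply: eqU_comp => //; apply: eqU_sym; apply: fser_X.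
have hB : eqU N (Bl * (Ps N \Po l)) 1.
  rewrite /Bl -comp_polyM [X in eqU _ _ X](_ : 1 = 1 \Po l); last by rewrite -polyC1 comp_polyC.
  by apply: eqU_comp => //; apply: BPs.
apply: eqU_trans (eqU_mul (eqU_sym hP) (@eqU_refl _ Bl)) _.
rewrite -mulrA [_ * Bl]mulrC.
apply: eqU_trans (eqU_mul (@eqU_refl _ l) hB) _.
by rewrite mulr1.
Qed.

Lemma spow_low k m : (m < k)%N -> spow L k m = 0.
Proof. by move=> h; rewrite (spow_tr (N := m)) // powlow // trL0. Qed.

Lemma ell_rec k m : spow L k.+1 m.+1 = \sum_(n < m.+1) bdiv n * spow L (n + k) m.
Proof.
set N := m.+1; set l := tr N L.
have hl0 : l`_0 = 0 by apply: trL0.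
rewrite (spow_tr (N := N)) // exprS.
have h1 : eqU N (l * l ^+ k) ('X * (tr N bdiv \Po l) * l ^+ k).
  by apply: eqU_mul => //; apply: eqU_sym; apply: K1.
rewrite h1 // -mulrA coefXM /=.
have h2 : eqU N (tr N bdiv \Po l) (\sum_(n < N.+1) (tr N bdiv)`_n *: l ^+ n).
  by move=> i hi; rewrite (comp_coef _ hl0 hi) coef_sum; apply: eq_bigr => n _; rewrite coefZ.
rewrite (eqU_mul h2 (@eqU_refl _ (l ^+ k))) // mulr_suml coef_sum.
rewrite big_ord_recr /= -scalerAl -exprD coefZ powlow // ?mulr0 ?addr0; last by lia.
apply: eq_bigr => n _; rewrite -scalerAl -exprD coefZ coef_tr; last first.
  by have := ltn_ord n; rewrite /N; lia.
by rewrite (spow_tr (N := N)).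
Qed.

Lemma spow1 n : spow L 1 n = L n.
Proof.
rewrite /= /smul big_ord_recr /= subnn /sdelta0 eqxx mulr1 big1 ?add0r // => j _.
by rewrite /sdelta0 subn_eq0 leqNgt ltn_ord mulr0.
Qed.

Lemma L1 : L 1%N = 1.
Proof. by rewrite -spow1 ell_rec big_ord1 bdiv0 mul1r. Qed.

End WithL.

Fixpoint seqs (m K : nat) : seq (seq nat) :=
  if m is m'.+1 then [seq x :: s | x <- iota 0 K, s <- seqs m' K] else [:: [::]].

Definition W (s : seq nat) : Qa := \prod_(x <- s) bdiv x.

Lemma iota_ord K (F : nat -> Qa) : \sum_(x <- iota 0 K) F x = \sum_(x < K) F x.
Proof. by rewrite -(big_mkord xpredT) /index_iota subn0. Qed.

Lemma big_seqsS m K (F : seq nat -> Qa) :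
  \sum_(s <- seqs m.+1 K) F s = \sum_(x <- iota 0 K) \sum_(s <- seqs m K) F (x :: s).
Proof. by rewrite /= big_allpairs_dep. Qed.

Lemma big_seqs0 K (F : seq nat -> Qa) : \sum_(s <- seqs 0 K) F s = F [::].
Proof. by rewrite /= big_seq1. Qed.

Lemma big_seqs_cat a b K (F : seq nat -> Qa) :
  \sum_(s <- seqs (a + b) K) F s =
  \sum_(s1 <- seqs a K) \sum_(s2 <- seqs b K) F (s1 ++ s2).
Proof.
elim: a F => [|a IH] F; first by rewrite big_seqs0.
rewrite addSn !big_seqsS; apply: eq_bigr => x _; exact: IH.
Qed.

Lemma mem_seqs m K s : (s \in seqs m K) = (size s == m) && all (fun x => x < K)%N s.
Proof.
elim: m s => [|m IH] s; first by case: s.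
apply/allpairsP/idP => [[[x t] [/= hx ht ->]]|].
  by move: hx; rewrite mem_iota add0n /= eqSS => ->; rewrite andTb -IH.
case: s => [//|x t] /= /andP[]; rewrite eqSS => hs /andP[hx ha].
by exists (x, t); split => //=; [rewrite mem_iota | rewrite IH hs].
Qed.

Lemma uniq_seqs m K : uniq (seqs m K).
Proof.
elim: m => [//|m IH] /=; apply: allpairs_uniq_dep => //; first exact: iota_uniq.
by move=> [x1 t1] [x2 t2] _ _ /= [-> ->].
Qed.

Definition vals r (f : {ffun 'I_r -> 'I_r.+1}) : seq nat := [seq nat_of_ord (f j) | j <- enum 'I_r].

Lemma size_vals r f : size (@vals r f) = r.
Proof. by rewrite size_map size_enum_ord. Qed.

Lemma nth_vals r f (j : 'I_r) : nth 0%N (@vals r f) j = f j.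
Proof.
rewrite (nth_map j) ?size_enum_ord //; congr (nat_of_ord (f _)).
by apply: val_inj; rewrite /= nth_enum_ord.
Qed.

Lemma ffun_seqs r (Phi : seq nat -> Qa) :
  \sum_(f : {ffun 'I_r -> 'I_r.+1}) Phi (vals f) = \sum_(s <- seqs r r.+1) Phi s.
Proof.
rewrite -(big_map (@vals r) xpredT Phi); apply: perm_big.
apply: uniq_perm; last 2 first.
- exact: uniq_seqs.
- move=> s; rewrite mem_seqs; apply/mapP/idP => [[f _ ->]|/andP[/eqP hs ha]].
    rewrite size_vals eqxx /=; apply/allP => x /mapP [j _ ->]; exact: ltn_ord.
  exists [ffun j : 'I_r => inord (nth 0%N s j) : 'I_r.+1]; first exact: mem_index_enum.
  apply: (@eq_from_nth _ 0%N); first by rewrite size_vals.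
  move=> k hk; rewrite hs in hk; rewrite -[k]/(nat_of_ord (Ordinal hk)) nth_vals ffunE inordK //.
  have := allP ha (nth 0%N s k); rewrite mem_nth ?hs // => /(_ isT).
  by rewrite ltnS => h; apply: (leq_trans h); rewrite -hs -ltnS; exact: ltnSn.
- rewrite map_inj_uniq ?index_enum_uniq // => f g h; apply/ffunP => j.
  apply: ord_inj; by rewrite -!nth_vals h.
Qed.

Lemma sumn_take_nth s j :
  sumn (take j s) = (\sum_(k < size s | (k < j)%N) nth 0%N s k)%N.
Proof.
elim: s j => [|x t IH] j; first by rewrite big_ord0.
rewrite /= big_mkcond big_ord_recl /=.
case: j => [|j] /=.
  by rewrite big1 // => k _.
by rewrite IH big_mkcond.
Qed.

Lemma sumn_drop_nth s j :
  sumn (drop j s) = (\sum_(k < size s | (j <= k)%N) nth 0%N s k)%N.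
Proof.
elim: s j => [|x t IH] j; first by rewrite big_ord0.
rewrite /= big_mkcond big_ord_recl /=.
case: j => [|j] /=.
  by rewrite -{1}(drop0 t) IH big_mkcond.
by rewrite IH big_mkcond.
Qed.

Lemma sum_vals r (f : {ffun 'I_r -> 'I_r.+1}) (P : pred nat) :
  (\sum_(k < r | P k) f k = \sum_(k < size (vals f) | P k) nth 0%N (vals f) k)%N.
Proof.
rewrite -(big_mkord P (fun k => nth 0%N (vals f) k)) size_vals big_mkord.
by apply: eq_bigr => k _; rewrite nth_vals.
Qed.

Definition Pl (i r : nat) (s : seq nat) : bool :=
  [&& sumn s == r, all (fun j => sumn (take j s) < j)%N (iota 1 i.-1)
    & all (fun j => sumn (drop j s) <= r - j)%N (iota i (r - i))].

Lemma inS_Pl i r f : (1 <= i)%N -> (i <= r)%N -> inS i r f = Pl i r (vals f).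
Proof.
move=> hi hr; rewrite /inS /Pl; congr [&& _, _ & _].
- by rewrite -[X in sumn X]take_size sumn_take_nth (sum_vals f xpredT); congr (_ == _);
     apply: eq_bigl => k; rewrite ltn_ord.
- apply/forallP/allP => [h j|h j].
    rewrite mem_iota => /andP[h1 h2].
    have hjr : (j < r)%N by lia.
    have hji : (j < i)%N by lia.
    by have := h (Ordinal hjr); rewrite /= h1 hji /= sumn_take_nth -(sum_vals f (fun k => k < j)%N).
  apply/implyP => /andP[h1 h2].
  have := h j; rewrite mem_iota h1 /=.
  have -> : (j < 1 + i.-1)%N by lia.
  by move=> /(_ isT); rewrite sumn_take_nth -(sum_vals f (fun k => k < j)%N).
- apply/forallP/allP => [h j|h j].
    rewrite mem_iota => /andP[h1 h2].
    have hjr : (j < r)%N by lia.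
    have := h (Ordinal hjr); rewrite /= h1 /=.
    by rewrite sumn_drop_nth -(sum_vals f (fun k => j <= k)%N).
  apply/implyP => h1.
  have := h j; rewrite mem_iota h1 /=.
  have -> : (j < i + (r - i))%N by have := ltn_ord j; lia.
  by move=> /(_ isT); rewrite sumn_drop_nth -(sum_vals f (fun k => j <= k)%N).
Qed.

Lemma prod_vals r (f : {ffun 'I_r -> 'I_r.+1}) :
  \prod_(j < r) (bernoulli_poly (f j) * invfact (f j)) = W (vals f).
Proof.
rewrite /W big_map big_enum /=; apply: eq_bigr => j _.
rewrite /bernoulli_poly /invfact mulrAC -polyC_natr -polyCM mulfV ?mul1r //.
by rewrite pnatr_eq0 -lt0n fact_gt0.
Qed.

Lemma Cpoly_seqs i r : (1 <= i)%N -> (i <= r)%N ->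
  Cpoly i r = (-1) ^+ r * \sum_(s <- seqs r r.+1) (Pl i r s)%:R * W s.
Proof.
move=> hi hr; rewrite /Cpoly -ffun_seqs big_mkcond /=; congr (_ * _).
apply: eq_bigr => f _; rewrite inS_Pl // prod_vals.
by case: (Pl i r (vals f)); rewrite ?mul1r ?mul0r.
Qed.

Definition P1 (s : seq nat) : bool :=
  all (fun j => sumn (take j s) < j)%N (iota 1 (size s)).
Definition P2 (s : seq nat) : bool :=
  all (fun j => sumn (drop j s) <= size s - j)%N (iota 0 (size s)).

Lemma sumn_rcons s x : sumn (rcons s x) = (sumn s + x)%N.
Proof. by rewrite -cats1 sumn_cat /= addn0. Qed.

Lemma W_rcons s x : W (rcons s x) = W s * bdiv x.
Proof. by rewrite /W -cats1 big_cat big_seq1. Qed.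

Lemma W_cons x s : W (x :: s) = bdiv x * W s.
Proof. by rewrite /W big_cons. Qed.

Lemma W_cat s t : W (s ++ t) = W s * W t.
Proof. by rewrite /W big_cat. Qed.

Lemma P1_rcons s x : P1 (rcons s x) = P1 s && (sumn s + x < (size s).+1)%N.
Proof.
rewrite /P1 size_rcons -[X in iota 1 X]addn1 iotaD all_cat /= andbT; congr (_ && _).
  apply: eq_in_all => j; rewrite mem_iota => /andP[_ hj].
  by rewrite -cats1 takel_cat //; lia.
by rewrite take_oversize ?size_rcons ?sumn_rcons; [congr (_ < _)%N; lia | lia].
Qed.

Lemma P1_sum s : P1 s -> (sumn s <= size s)%N.
Proof.
case: (size s =P 0%N) => [/eqP/nilP -> //|hs].
rewrite /P1 => /allP /(_ (size s)); rewrite mem_iota take_size.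
have -> : (1 <= size s < 1 + size s)%N by lia.
by move=> /(_ isT) /ltnW.
Qed.

Lemma P2_cons x s : P2 (x :: s) = (x + sumn s <= (size s).+1)%N && P2 s.
Proof.
rewrite /P2 /= subn0; congr (_ && _).
rewrite -[1%N]addn0 iotaDl all_map; apply: eq_all => j /=.
by rewrite add1n subSS.
Qed.

Lemma P2_sum s : P2 s -> (sumn s <= size s)%N.
Proof.
case: s => [//|x t]; rewrite P2_cons => /andP[h _] //.
Qed.

Section Comb.
Variable L : nat -> Qa.
Hypothesis hL : isL L.

Definition T1 K m h := \sum_(s <- seqs m K) (P1 s && (sumn s + h == m)%N)%:R * W s.
Definition T2 K m e := \sum_(s <- seqs m K) (P2 s && (sumn s + e == m)%N)%:R * W s.

Lemma sum_iota_spow K m c (hK : (m < K)%N) :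
  \sum_(x <- iota 0 K) bdiv x * spow L (x + c) m = \sum_(n < m.+1) bdiv n * spow L (n + c) m.
Proof.
rewrite iota_ord; symmetry; apply: (@big_widen0 m.+1 K (fun n => bdiv n * spow L (n + c) m)) => // k hk _.
by rewrite (spow_low hL) ?mulr0 //; lia.
Qed.

Lemma T1_ell K m h : (m < K)%N -> T1 K m h = spow L h m.
Proof.
elim: m h => [|m IH] h hK.
  rewrite /T1 big_seqs0 /= /W big_nil mulr1 add0n.
  by case: h => [//|h]; rewrite (spow_low hL).
rewrite /T1 -addn1 big_seqs_cat addn1 big_seq.
under eq_bigr => s hs.
  rewrite big_seqsS; under eq_bigr do rewrite big_seqs0 cats1 P1_rcons sumn_rcons W_rcons.
  over.
rewrite -big_seq /=.
case: h => [|h'].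
  rewrite /= /sdelta0 /=; rewrite big_seq big1 // => s hs; rewrite big1 // => x _.
  move: hs; rewrite mem_seqs => /andP[/eqP hs _]; rewrite hs.
  by rewrite (_ : (_ && _) = false) ?mul0r //; case: (P1 s) => /=; lia.
rewrite (ell_rec hL) -(@sum_iota_spow K) //; last by apply: ltnW.
rewrite (@exchange_big _ _ _ _ _ (seqs m K) (iota 0 K) xpredT xpredT) /=.
apply: eq_bigr => x _.
rewrite -(IH (x + h')%N) ?(ltnW hK) // /T1 mulr_sumr big_seq [RHS]big_seq.
apply: eq_bigr => s hs.
move: hs; rewrite mem_seqs => /andP[/eqP hs _]; rewrite hs.
rewrite (_ : (_ && _) = (P1 s && (sumn s + (x + h') == m)%N)); last first.
  by case: (P1 s) => //=; lia.
by ring.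
Qed.

Lemma T2_ell K m e : (m.+1 < K)%N -> T2 K m e = spow L e.+1 m.+1.
Proof.
elim: m e => [|m IH] e hK.
  rewrite (ell_rec hL) big_ord1 bdiv0 mul1r /T2 big_seqs0 /= /W big_nil mulr1 !add0n.
  by case: e => [//|e]; rewrite (spow_low hL).
rewrite /T2 big_seqsS (ell_rec hL) -(@sum_iota_spow K m.+1 e) //; last exact: ltnW hK.
apply: eq_bigr => x _.
rewrite big_seq.
case hxe: (x + e)%N => [|c].
  rewrite /= /sdelta0 /= mulr0 big1 // => s hs.
  move: hs; rewrite mem_seqs => /andP[/eqP hs _].
  rewrite P2_cons /=; case h2: (P2 s); last by rewrite andbF mul0r.
  have := P2_sum h2; rewrite hs => hsum.
  by rewrite (_ : (_ && _) = false) ?mul0r //; lia.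
rewrite -(IH c) ?(ltnW hK) // /T2 mulr_sumr big_seq.
apply: eq_bigr => s hs.
move: hs; rewrite mem_seqs => /andP[/eqP hs _].
rewrite P2_cons W_cons /=.
case h2: (P2 s); last by rewrite !andbF !mul0r mulr0.
have := P2_sum h2; rewrite hs => hsum.
rewrite (_ : (_ && _) = (sumn s + c == m)%N); last by rewrite andbT; lia.
by rewrite mulrCA.
Qed.

Lemma sum_pick (n a : nat) (G : nat -> Qa) : (n <= a)%N ->
  \sum_(h < a.+1) ((n + h == a)%N)%:R * G h = G (a - n)%N.
Proof.
move=> hn.
have ha : (a - n < a.+1)%N by lia.
rewrite (bigD1 (Ordinal ha)) //= (_ : (n + (a - n) == a)%N = true) ?mul1r; last by lia.
rewrite big1 ?addr0 // => h /eqP hne.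
rewrite (_ : (n + h == a)%N = false) ?mul0r //.
apply/negbTE/eqP => e; apply: hne; apply: val_inj => /=; lia.
Qed.

Lemma Pl_split a b s1 x s2 : size s1 = a -> size s2 = b ->
  Pl a.+1 (a + b.+1) (s1 ++ x :: s2) =
  [&& (sumn s1 + x + sumn s2 == a + b.+1)%N, P1 s1 & P2 s2].
Proof.
move=> h1 h2; rewrite /Pl sumn_cat /= addnA; congr [&& _, _ & _].
  rewrite /P1 h1; apply: eq_in_all => j; rewrite mem_iota => /andP[_ hj].
  by rewrite takel_cat // h1; lia.
rewrite /P2 h2 (_ : (a + b.+1 - a.+1 = b)%N); last by lia.
rewrite -[a.+1]addn0 iotaDl all_map; apply: eq_all => j /=.
rewrite drop_cat h1 (_ : (a.+1 + j < a = false)%N); last by lia.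
rewrite (_ : (a.+1 + j - a = j.+1)%N); last by lia.
by rewrite /= (_ : (a + b.+1 - (a.+1 + j) = b - j)%N) //; lia.
Qed.

Definition Gh K b h : Qa :=
  \sum_(x <- iota 0 K) bdiv x * (if (h < x)%N then T2 K b (x - h.+1) else 0).

Lemma comb_step a b K s1 : s1 \in seqs a K ->
  \sum_(t <- seqs b.+1 K) (Pl a.+1 (a + b.+1) (s1 ++ t))%:R * W (s1 ++ t)
  = \sum_(h < a.+1) (P1 s1 && (sumn s1 + h == a)%N)%:R * W s1 * Gh K b h.
Proof.
rewrite mem_seqs => /andP[/eqP hs1 _].
rewrite big_seqsS.
case hP: (P1 s1).
  have hn := P1_sum hP; rewrite hs1 in hn.
  under [RHS]eq_bigr do rewrite andTb -mulrA.
  rewrite (@sum_pick _ _ (fun h => W s1 * Gh K b h)) // /Gh mulr_sumr.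
  apply: eq_bigr => x _; rewrite big_seq.
  under eq_bigr => s2 hs2.
    move: hs2; rewrite mem_seqs => /andP[/eqP hs2 _].
    rewrite Pl_split // hP W_cat W_cons.
    over.
  rewrite -big_seq /=.
  case hx: (a - sumn s1 < x)%N; last first.
    rewrite !mulr0 big_seq big1 // => s2 hs2.
    move: hs2; rewrite mem_seqs => /andP[/eqP hs2 _].
    case h2: (P2 s2); last by rewrite andbF mul0r.
    have := P2_sum h2; rewrite hs2 => hsum.
    by rewrite (_ : (_ && _) = false) ?mul0r //; lia.
  rewrite /T2 !mulr_sumr big_seq [RHS]big_seq; apply: eq_bigr => s2 hs2.
  move: hs2; rewrite mem_seqs => /andP[/eqP hs2 _].
  case h2: (P2 s2); last by rewrite !andbF !mul0r !mulr0.
  have := P2_sum h2; rewrite hs2 => hsum.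
  rewrite andbT (_ : (sumn s1 + x + sumn s2 == a + b.+1)%N = (sumn s2 + (x - (a - sumn s1).+1) == b)%N);
    last by lia.
  by rewrite andTb; ring.
rewrite [RHS]big1 ?big1 // => [x _|h _]; last by rewrite andFb mul0r mul0r.
rewrite big_seq big1 // => s2 hs2.
move: hs2; rewrite mem_seqs => /andP[/eqP hs2 _].
by rewrite Pl_split // hP andbF mul0r.
Qed.

Lemma cut_sum a x b :
  \sum_(h < a.+1) (if (h < x)%N then spow L h a * spow L (x - h) b.+1 else 0)
  = \sum_(p < x.+1) spow L p a * spow L (x - p) b.+1.
Proof.
pose G := fun h => if (h < x)%N then spow L h a * spow L (x - h) b.+1 else 0.
rewrite (@big_widen0 a.+1 (a + x).+2 G); last 2 first.
- by lia.
- by move=> k hk _; rewrite /G; case: ifP => // _; rewrite (spow_low hL) ?mul0r.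
have -> : \sum_(p < x.+1) spow L p a * spow L (x - p) b.+1 = \sum_(p < x.+1) G p.
  rewrite big_ord_recr [RHS]big_ord_recr /= /G ltnn subnn /= /sdelta0 /= mulr0 addr0.
  by rewrite addr0; apply: eq_bigr => q _; rewrite ltn_ord.
rewrite (@big_widen0 x.+1 (a + x).+2 G) //; first by lia.
by move=> k hk _; rewrite /G (_ : (k < x)%N = false) //; lia.
Qed.

Lemma comb_main a b K : (a < K)%N -> (b.+1 < K)%N ->
  \sum_(s <- seqs (a + b.+1) K) (Pl a.+1 (a + b.+1) s)%:R * W s
  = \sum_(x < K) bdiv x * \sum_(p < x.+1) spow L p a * spow L (x - p) b.+1.
Proof.
move=> haK hbK.
rewrite big_seqs_cat big_seq.
under eq_bigr => s1 hs1 do rewrite comb_step //.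
rewrite -big_seq exchange_big /=.
under eq_bigr => h _ do rewrite -mulr_suml -/(T1 K a h) T1_ell //.
rewrite /Gh; under eq_bigr => h _ do rewrite iota_ord mulr_sumr.
rewrite exchange_big /=; apply: eq_bigr => x _.
rewrite -cut_sum mulr_sumr; apply: eq_bigr => h _.
case: ifP => hx; last by rewrite !mulr0.
rewrite T2_ell // (_ : (x - h.+1).+1 = x - h)%N; last by lia.
by ring.
Qed.

End Comb.

Notation QQ := {poly {poly Qa}}.

Definition TB (N : nat) (F : nat -> nat -> Qa) : QQ := \poly_(i < N.+1) \poly_(j < N.+1) F i j.
Definition eqB (M : nat) (P Q : QQ) := forall i j, (i + j <= M)%N -> P`_i`_j = Q`_i`_j.
Definition px (p : {poly Qa}) : QQ := map_poly polyC p.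
Definition py (p : {poly Qa}) : QQ := p%:P.

Lemma coef_TB N F i j : (i <= N)%N -> (j <= N)%N -> (TB N F)`_i`_j = F i j.
Proof. by move=> hi hj; rewrite coef_poly ltnS hi coef_poly ltnS hj. Qed.

Lemma coef_px p i j : (px p)`_i`_j = if j == 0%N then p`_i else 0.
Proof. by rewrite /px coef_map /= coefC. Qed.

Lemma coef_py p i j : (py p)`_i`_j = if i == 0%N then p`_j else 0.
Proof. by rewrite /py coefC; case: (i == 0%N); rewrite ?coef0. Qed.

Lemma eqB_sym M P Q : eqB M P Q -> eqB M Q P.
Proof. by move=> h i j hij; rewrite h. Qed.
Lemma eqB_trans M P Q R : eqB M P Q -> eqB M Q R -> eqB M P R.
Proof. by move=> h1 h2 i j hij; rewrite h1 ?h2. Qed.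
Lemma eqB_add M P P' Q Q' : eqB M P P' -> eqB M Q Q' -> eqB M (P + Q) (P' + Q').
Proof. by move=> h1 h2 i j hij; rewrite !coefD h1 ?h2. Qed.
Lemma eqB_opp M P P' : eqB M P P' -> eqB M (- P) (- P').
Proof. by move=> h1 i j hij; rewrite !coefN h1. Qed.
Lemma eqB_sub M P P' Q Q' : eqB M P P' -> eqB M Q Q' -> eqB M (P - Q) (P' - Q').
Proof. by move=> h1 h2; apply: eqB_add => //; apply: eqB_opp. Qed.

Lemma eqB_mul M P P' Q Q' : eqB M P P' -> eqB M Q Q' -> eqB M (P * Q) (P' * Q').
Proof.
move=> hp hq i j hij; rewrite !coefM !coef_sum; apply: eq_bigr => k _.
rewrite !coefM; apply: eq_bigr => l _.
have hk : (k <= i)%N by rewrite -ltnS.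
have hl : (l <= j)%N by rewrite -ltnS.
rewrite hp ?hq //; lia.
Qed.

Lemma eqB_refl M P : eqB M P P. Proof. by []. Qed.

Lemma bmul_TB N F G i j : (i <= N)%N -> (j <= N)%N ->
  bmul F G i j = (TB N F * TB N G)`_i`_j.
Proof.
move=> hi hj; rewrite coefM coef_sum /bmul; apply: eq_bigr => k _.
rewrite coefM; apply: eq_bigr => l _.
have hk : (k <= i)%N by rewrite -ltnS.
have hl : (l <= j)%N by rewrite -ltnS.
rewrite !coef_TB //; lia.
Qed.

Lemma eqU_px N M p q : (M <= N)%N -> eqU N p q -> eqB M (px p) (px q).
Proof. by move=> hM h i j hij; rewrite !coef_px h //; lia. Qed.

Lemma eqU_py N M p q : (M <= N)%N -> eqU N p q -> eqB M (py p) (py q).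
Proof. by move=> hM h i j hij; rewrite !coef_py h //; lia. Qed.

Lemma TB_inX N M f : (M <= N)%N -> eqB M (TB N (inX f)) (px (tr N f)).
Proof. by move=> hM i j hij; rewrite coef_TB ?coef_px ?coef_tr /inX //; lia. Qed.

Lemma TB_inY N M f : (M <= N)%N -> eqB M (TB N (inY f)) (py (tr N f)).
Proof. by move=> hM i j hij; rewrite coef_TB ?coef_py ?coef_tr /inY //; lia. Qed.

Lemma TB_sub N A B : TB N (fun p q => A p q - B p q) = TB N A - TB N B.
Proof.
apply/polyP => i; rewrite coefB !coef_poly; case: ifP => _; last by rewrite subr0.
by apply/polyP => j; rewrite coefB !coef_poly; case: ifP => _; rewrite ?subr0.
Qed.

Lemma tr_delta1 N : (1 <= N)%N -> eqU N (tr N (fun m => (m == 1%N)%:R)) 'X.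
Proof. by move=> hN i hi; rewrite coef_tr // coefX. Qed.

Lemma spow_sneg f k n : spow (sneg f) k n = (-1) ^+ n * spow f k n.
Proof.
elim: k n => [|k IH] n.
  by rewrite /= /sdelta0; case: n => [|n]; rewrite ?expr0 ?mul1r ?mulr0.
rewrite /= /smul mulr_sumr; apply: eq_bigr => j _; rewrite IH /sneg.
have hj : (j <= n)%N by rewrite -ltnS.
rewrite mulrACA -exprD subnKC //.
Qed.

Section Uniq.
Variables (M : nat) (Dl D : QQ) (d c : nat -> Qa).
Hypothesis hD0 : forall j, D`_0`_j = d j.
Hypothesis hd0 : d 0%N = 0.
Hypothesis hd1 : d 1%N = -1.
Hypothesis hDi : forall i j, (0 < i)%N -> D`_i`_j = if j == 0%N then c i else 0.
Hypothesis hc1 : c 1%N = 1.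
Hypothesis hE : eqB M.+1 (Dl * D) 0.

Lemma uniq_step m n : (m + n <= M)%N ->
  (forall m' n', (m' + n' < m + n)%N -> Dl`_m'`_n' = 0) ->
  ((0 < m)%N -> Dl`_m.-1`_n.+1 = 0) -> Dl`_m`_n = 0.
Proof.
move=> hmn IH IH2.
have := hE (i := m) (j := n.+1); rewrite coef0 coefM coef_sum big_ord_recr /= subnn.
move=> /(_ ltac:(lia)).
rewrite big1; last first.
  move=> [k hk] _ /=.
  have -> : D`_(m - k) = (c (m - k))%:P.
    by apply/polyP => j; rewrite coefC hDi //; lia.
  rewrite coefMC.
  case: (ltnP k.+1 m) => hk2.
    by rewrite IH ?mul0r //; lia.
  have -> : k = m.-1 by lia.
  by rewrite IH2 ?mul0r //; lia.
rewrite add0r coefM big_ord_recr /= subnn hD0 hd0 mulr0 addr0 big_ord_recr /=.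
rewrite (_ : (n.+1 - n = 1)%N); last by lia.
rewrite hD0 hd1 big1.
  by rewrite add0r mulrN1 coef0 => /eqP; rewrite oppr_eq0 => /eqP.
move=> [l hl] _ /=; rewrite IH ?mul0r //; lia.
Qed.

Lemma uniq_B : eqB M Dl 0.
Proof.
suff main : forall t, (t <= M)%N -> forall m n, (m + n = t)%N -> Dl`_m`_n = 0.
  by move=> i j hij; rewrite coef0 coef0 (main (i + j)%N).
elim/ltn_ind => t IHt ht m; elim: m => [|m IHm] n hmn.
  apply: uniq_step => //; first by lia.
  by move=> m' n' h; apply: (IHt (m' + n')%N) => //; lia.
apply: uniq_step => //; first by lia.
  by move=> m' n' h; apply: (IHt (m' + n')%N) => //; lia.
by move=> _; apply: IHm; lia.
Qed.
End Uniq.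

Section GSide.
Variables (L : nat -> Qa) (G : nat -> nat -> Qa).
Hypothesis hL : isL L.
Hypothesis hG : isG L G.

Notation ly N := (tr N (sneg L)).

Lemma ly0 N : (ly N)`_0 = 0.
Proof. by rewrite coef_tr // /sneg (L0 hL) mulr0. Qed.

Lemma ly_pow N k n : (n <= N)%N -> ((ly N) ^+ k)`_n = (-1) ^+ n * spow L k n.
Proof. by move=> hn; rewrite -(spow_tr _ _ hn) spow_sneg. Qed.

Lemma ly_key N : eqU N (ly N) (- 'X * (tr N bdiv \Po ly N)).
Proof.
case=> [|n] hn.
  by rewrite coef_tr // /sneg (L0 hL) mulr0 mulNr coefN coefXM /= oppr0.
rewrite coef_tr // /sneg mulNr coefN coefXM /=.
have hK := K1 hL hn.
rewrite coefXM /= coef_tr // (comp_coef _ (trL0 hL N) (ltnW hn)) in hK.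
rewrite (comp_coef _ (ly0 N) (ltnW hn)) -hK mulr_sumr -sumrN.
apply: eq_bigr => k _; rewrite ly_pow ?(ltnW hn) // -(spow_tr _ _ (ltnW hn)).
by rewrite exprS; ring.
Qed.

Definition Sb N : {poly Qa} := \sum_(k < N.+1) (bdiv k)%:P * (ly N) ^+ k.

Lemma Sb_eq N : eqU N (Sb N) (tr N bdiv \Po ly N).
Proof.
move=> i hi; rewrite (comp_coef _ (ly0 N) hi) /Sb coef_sum.
apply: eq_bigr => k _; rewrite coefCM coef_tr //; by rewrite -ltnS.
Qed.

Definition Qc N : QQ := \sum_(k < N.+1) (bdiv k)%:P%:P *
   \sum_(p < k.+1) px (ly N) ^+ p * py (ly N) ^+ (k - p).
Definition Gc N : QQ := 'X * py 'X * Qc N.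
Definition Dp N : QQ := py (ly N) - px (ly N).
Definition Rp N : QQ := py 'X * px ((ly N) ^+ 2) - 'X * py ((ly N) ^+ 2).

Lemma px_C (c : Qa) : px c%:P = c%:P%:P.
Proof. by rewrite /px map_polyC. Qed.

Lemma px_X : px 'X = 'X.
Proof. by rewrite /px map_polyX. Qed.

Lemma QcD N : Qc N * Dp N = py (ly N * Sb N) - px (ly N * Sb N).
Proof.
rewrite /Qc /Dp /Sb mulr_suml.
have -> : py (ly N * \sum_(k < N.+1) (bdiv k)%:P * ly N ^+ k)
   = \sum_(k < N.+1) (bdiv k)%:P%:P * py (ly N) ^+ k.+1.
  rewrite /py rmorphM rmorph_sum mulr_sumr; apply: eq_bigr => k _.
  by rewrite rmorphM rmorphXn exprS; ring.
have -> : px (ly N * \sum_(k < N.+1) (bdiv k)%:P * ly N ^+ k)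
   = \sum_(k < N.+1) (bdiv k)%:P%:P * px (ly N) ^+ k.+1.
  rewrite /px rmorphM rmorph_sum mulr_sumr; apply: eq_bigr => k _.
  by rewrite rmorphM rmorphXn exprS /= map_polyC; ring.
rewrite -sumrB; apply: eq_bigr => k _.
rewrite -mulrA -mulrBr; congr (_ * _).
rewrite subrXX /=; rewrite mulrC; congr (_ * _).
by apply: eq_bigr => p _; rewrite mulrC.
Qed.

Lemma Gc_eq N : eqB N (Gc N * Dp N) (Rp N).
Proof.
set u := - 'X * Sb N.
have hu : eqU N (ly N) u.
  have h2 : eqU N (- 'X * (tr N bdiv \Po ly N)) u.
    by apply: eqU_mul => //; apply: eqU_sym; exact: (@Sb_eq N).
  by move=> i hi; apply: (eqU_trans (@ly_key N) h2 hi).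
rewrite /Gc -mulrA QcD.
apply: (@eqB_trans _ _ ('X * py 'X * (py (u * Sb N) - px (u * Sb N)))).
  apply: eqB_mul => //; apply: eqB_sub.
    by apply: (eqU_py (leqnn N)); apply: eqU_mul.
  by apply: (eqU_px (leqnn N)); apply: eqU_mul.
apply: (@eqB_trans _ _ (py 'X * px (u ^+ 2) - 'X * py (u ^+ 2))); last first.
  apply: eqB_sub; apply: eqB_mul => //.
    by apply: (eqU_px (leqnn N)); apply: eqU_sym; apply: eqU_exp.
  by apply: (eqU_py (leqnn N)); apply: eqU_sym; apply: eqU_exp.
have -> : px (u ^+ 2) = 'X ^+ 2 * px (Sb N) ^+ 2.
  by rewrite /u /px !rmorphXn rmorphM rmorphN /= map_polyX; ring.
have -> : px (u * Sb N) = - 'X * px (Sb N) ^+ 2.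
  by rewrite /u /px !rmorphM rmorphN /= map_polyX; ring.
have -> : py (u ^+ 2) = py 'X ^+ 2 * py (Sb N) ^+ 2.
  by rewrite /u /py !rmorphXn rmorphM rmorphN /=; ring.
have -> : py (u * Sb N) = - py 'X * py (Sb N) ^+ 2.
  by rewrite /u /py !rmorphM rmorphN /=; ring.
have E : forall P Q : QQ, P = Q -> eqB N P Q by move=> P Q ->.
by apply: E; ring.
Qed.

Lemma TG_eq N : (1 <= N)%N -> eqB N (TB N G * Dp N) (Rp N).
Proof.
move=> hN i j hij.
have hi : (i <= N)%N by lia.
have hj : (j <= N)%N by lia.
have e2 : eqU N (tr N (spow (sneg L) 2)) (ly N ^+ 2).
  by move=> n hn; rewrite coef_tr // (spow_tr _ _ hn).
have eD : eqB N (TB N (fun p q => inY (sneg L) p q - inX (sneg L) p q)) (Dp N).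
  move=> a b hab; rewrite TB_sub /Dp !coefB.
  by rewrite (TB_inY _ (leqnn N) hab) (TB_inX _ (leqnn N) hab).
have eY : eqB N (TB N bY) (py 'X).
  move=> a b hab; rewrite /bY (TB_inY _ (leqnn N) hab).
  exact: (eqU_py (leqnn N) (tr_delta1 hN) hab).
have eX : eqB N (TB N bX) 'X.
  move=> a b hab; rewrite /bX (TB_inX _ (leqnn N) hab) -px_X.
  exact: (eqU_px (leqnn N) (tr_delta1 hN) hab).
have eX2 : eqB N (TB N (inX (spow (sneg L) 2))) (px (ly N ^+ 2)).
  move=> a b hab; rewrite (TB_inX _ (leqnn N) hab).
  exact: (eqU_px (leqnn N) e2 hab).
have eY2 : eqB N (TB N (inY (spow (sneg L) 2))) (py (ly N ^+ 2)).
  move=> a b hab; rewrite (TB_inY _ (leqnn N) hab).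
  exact: (eqU_py (leqnn N) e2 hab).
rewrite -(eqB_mul (@eqB_refl N (TB N G)) eD hij).
have := hG i j; rewrite !(bmul_TB (N := N)) // => ->.
rewrite /Rp !coefB.
by rewrite (eqB_mul eY eX2 hij) (eqB_mul eX eY2 hij).
Qed.


Lemma G_Gc M i j : (i + j <= M)%N -> G i j = (Gc M.+1)`_i`_j.
Proof.
move=> hij; set N := M.+1.
have hN : (1 <= N)%N by [].
have hE : eqB N ((TB N G - Gc N) * Dp N) 0.
  move=> a b hab; rewrite mulrBl coefB coefB (TG_eq hN hab) (Gc_eq hab).
  by rewrite subrr !coef0.
have hly1 : (ly N)`_1 = -1 by rewrite coef_tr // /sneg (L1 hL) expr1 mulr1.
have U := @uniq_B M (TB N G - Gc N) (Dp N) (fun j => (ly N)`_j) (fun i => - (ly N)`_i).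
have hD0 : forall b, (Dp N)`_0`_b = (ly N)`_b.
  move=> b; rewrite /Dp coefB coefB coef_py coef_px /=.
  by case: (b =P 0%N) => [->|_]; rewrite ?ly0 ?subr0 ?coef0.
have hDi : forall a b, (0 < a)%N -> (Dp N)`_a`_b = (if b == 0%N then - (ly N)`_a else 0).
  move=> a b ha; rewrite /Dp coefB coefB coef_py coef_px.
  rewrite (_ : (a == 0%N) = false); last by lia.
  by case: (b == 0%N); rewrite ?sub0r ?subr0 ?coef0 ?oppr0.
have := U hD0 (ly0 N) hly1 hDi hE i j hij.
rewrite coefB coef0 coefB coef0 => /subr0_eq <-.
by rewrite coef_TB //; lia.
Qed.

Lemma coef_Gc N i j : (0 < i)%N -> (0 < j)%N -> (i <= N)%N -> (j <= N)%N ->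
  (Gc N)`_i`_j = \sum_(k < N.+1) bdiv k * \sum_(p < k.+1)
     (((-1) ^+ i.-1 * spow L p i.-1) * ((-1) ^+ j.-1 * spow L (k - p) j.-1)).
Proof.
case: i => [//|i]; case: j => [//|j] _ _ hi hj /=.
rewrite /Gc -mulrA coefXM /= /py coefCM coefXM /= /Qc !coef_sum.
apply: eq_bigr => k _; rewrite coefCM coefCM !coef_sum.
congr (_ * _); apply: eq_bigr => p _.
rewrite -rmorphXn -rmorphXn coefMC /px coef_map /= coefCM.
by rewrite !ly_pow //; lia.
Qed.

End GSide.

Unset Implicit Arguments.

Theorem theorem6p4 (L : nat -> {poly rat}) (G : nat -> nat -> {poly rat}) :
  isL L -> isG L G ->
  forall i r : nat, (1 <= i)%N -> (i <= r)%N ->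
    Cpoly i r = G i (r - i + 2)%N.
Proof.
move=> hL hG i r hi hr.
case: i hi hr => // a _ hr.
have [b ->] : exists b, r = (a + b.+1)%N by exists (r - a.+1)%N; lia.
rewrite Cpoly_seqs //; last by lia.
rewrite (comb_main hL); [|lia|lia].
have -> : (a + b.+1 - a.+1 + 2 = b.+2)%N by lia.
rewrite (G_Gc hL hG (M := (a.+1 + b.+2)%N)) // coef_Gc //; [|lia|lia] => /=.
have -> : \sum_(k < (a.+1 + b.+2).+2) bdiv k * \sum_(p < k.+1)
     ((-1) ^+ a * spow L p a * ((-1) ^+ b.+1 * spow L (k - p) b.+1))
   = (-1) ^+ (a + b.+1) * \sum_(k < (a.+1 + b.+2).+2) bdiv k *
       \sum_(p < k.+1) spow L p a * spow L (k - p) b.+1.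
  rewrite mulr_sumr; apply: eq_bigr => k _; rewrite mulrCA; congr (_ * _).
  by rewrite mulr_sumr; apply: eq_bigr => p _; rewrite exprD; ring.
congr (_ * _); apply: (@big_widen0 _ _ (fun k => bdiv k * \sum_(p < k.+1) spow L p a * spow L (k - p) b.+1)); first by lia.
move=> k hk _; rewrite big1 ?mulr0 // => p _.
case: (ltnP a p) => hp; first by rewrite (spow_low hL) ?mul0r.
by rewrite [spow L (k - p) _](spow_low hL) ?mulr0 //; lia.
Qed.
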